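(* For all $s\in\mathbb{Z}$ and each $x\in V_{\alpha_s}$, $g_{\alpha_s}(x)=a_{\alpha_{s+1}}(b_{\alpha_s}(x))$.
   Context: Fix $d\ge1$, $\lambda>0$, scales $\alpha_s=\lambda 2^s$ ($s\in\mathbb{Z}$), and grids $G_{\alpha_s}\subset\mathbb{R}^d$ with $G_{\alpha_0}=\lambda\mathbb{Z}^d$ and $G_{\alpha_{s+1}}=2(G_{\alpha_s}-O_s)+O_s+\frac{\alpha_s}{2}\varepsilon_s$ for some $O_s\in G_{\alpha_s}$, $\varepsilon_s\in\{-1,1\}^d$. $\mathrm{Vor}_G(x)$ is the Voronoi cell of $x$ in the grid $G$ (closed cube of side $\alpha_s$ centered at $x$ for $G=G_{\alpha_s}$). The vertex map $g_{\alpha_s}:G_{\alpha_s}\to G_{\alpha_{s+1}}$ sends $x$ to the unique $y\in G_{\alpha_{s+1}}$ with $x\in \mathrm{Vor}_{G_{\alpha_{s+1}}}(y)$. Let $P\subset\mathbb{R}^d$ be finite. For $p\in P$, $a_{\alpha_s}(p)$ is the grid point of $G_{\alpha_s}$ whose Voronoi cell contains $p$ (assumed unique). The active vertices are $V_{\alpha_s}:=a_{\alpha_s}(P)$. For $v\in V_{\alpha_s}$, $b_{\alpha_s}(v)$ is the point of $P\cap \mathrm{Vor}_{G_{\alpha_s}}(v)$ closest to $v$, ties broken by a fixed total order on $P$. *)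

(* Defs.v *)
From mathcomp Require Import all_boot all_order all_algebra.
From mathcomp Require Import all_classical all_reals.
Set Implicit Arguments. Unset Strict Implicit. Unset Printing Implicit Defensive.
Import Order.TTheory GRing.Theory Num.Theory.
Local Open Scope classical_set_scope.
Local Open Scope ring_scope.

Section Grids.
Variables (R : realType) (d : nat).
Notation pt := 'rV[R]_d.

Definition edist (x y : pt) : R := Num.sqrt (\sum_(i < d) (x 0 i - y 0 i) ^+ 2).

Definition Vor (G : set pt) (x : pt) : set pt :=
  [set y | forall z, G z -> edist y x <= edist y z].

Definition alpha (lam : R) (s : int) : R := lam * (2%:R) ^ s.

Definition grid_family (lam : R) (G : int -> set pt) : Prop :=
  G 0%Z = [set (lam *: map_mx intr k) | k in [set: 'rV[int]_d]] /\
  forall s : int, exists O : pt, G s O /\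
    exists eps : pt, (forall i, eps 0 i = 1 \/ eps 0 i = -1) /\
      G (s + 1)%R = [set (2%:R *: (x - O) + O + (alpha lam s / 2%:R) *: eps)
                    | x in G s].

Definition gmap (G : int -> set pt) (s : int) (x : pt) : pt :=
  xget 0 [set y | G (s + 1)%R y /\ Vor (G (s + 1)%R) y x].

Definition amap (G : int -> set pt) (s : int) (p : pt) : pt :=
  xget 0 [set y | G s y /\ Vor (G s) y p].

Definition active (G : int -> set pt) (P : set pt) (s : int) : set pt :=
  [set amap G s p | p in P].

Definition bmap (G : int -> set pt) (P : set pt) (le : pt -> pt -> Prop)
    (s : int) (v : pt) : pt :=
  xget 0 [set q | P q /\ Vor (G s) v q /\
     forall q', P q' -> Vor (G s) v q' ->
       edist q v < edist q' v \/ (edist q v = edist q' v /\ le q q')].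

Definition total_order_on (P : set pt) (le : pt -> pt -> Prop) : Prop :=
  (forall p, P p -> le p p) /\
  (forall p q, P p -> P q -> le p q -> le q p -> p = q) /\
  (forall p q r, P p -> P q -> P r -> le p q -> le q r -> le p r) /\
  (forall p q, P p -> P q -> le p q \/ le q p).

Definition unique_assignment (G : int -> set pt) (P : set pt) : Prop :=
  forall (s : int) (p : pt), P p -> exists! y, G s y /\ Vor (G s) y p.

End Grids.

(* Main.v *)
Require Import Defs.
From mathcomp Require Import all_boot all_order all_algebra.
From mathcomp Require Import all_classical all_reals.
From mathcomp Require Import finmap.
From mathcomp Require Import zify ring lra.
Import Order.TTheory GRing.Theory Num.Theory.
Local Open Scope classical_set_scope.
Local Open Scope ring_scope.


Lemma coord_le (R : realType) (b t N : R) (n : int) : 0 < b -> `|t| <= b / 2%:R ->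
  N = n%:~R -> t ^+ 2 <= (t - b * N) ^+ 2.
Proof.
move=> hb; rewrite ler_norml => /andP[h1 h2] ->.
have : (n = 0 \/ 1 <= n \/ n <= -1)%R by lia.
case=> [->|[hn|hn]]; first by rewrite mulr0 subr0.
- have hN : 1 <= n%:~R :> R by rewrite (ler_int R 1 n).
  have h3 : b <= b * n%:~R by nra.
  set u := b * n%:~R in h3 *. nra.
- have hN : n%:~R <= -1 :> R by rewrite (ler_int R n (-1)).
  have h3 : b <= - (b * n%:~R) by nra.
  set u := b * n%:~R in h3 *. nra.
Qed.

Lemma coord_lt (R : realType) (b t N : R) (n : int) : 0 < b -> `|t| < b / 2%:R ->
  n != 0 -> N = n%:~R -> t ^+ 2 < (t - b * N) ^+ 2.
Proof.
move=> hb; rewrite ltr_norml => /andP[h1 h2] n0 ->.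
have : (1 <= n \/ n <= -1)%R by lia.
case=> [hn|hn].
- have hN : 1 <= n%:~R :> R by rewrite (ler_int R 1 n).
  have h3 : b <= b * n%:~R by nra.
  set u := b * n%:~R in h3 *. nra.
- have hN : n%:~R <= -1 :> R by rewrite (ler_int R n (-1)).
  have h3 : b <= - (b * n%:~R) by nra.
  set u := b * n%:~R in h3 *. nra.
Qed.

Lemma int_fact (m : int) (e : int) : (e = 1 \/ e = -1) ->
  let k := if e == 1 then (m %/ 2)%Z else ((m + 1) %/ 2)%Z in
  (2 * k - m = 0 \/ 2 * k - m = - e).
Proof. case=> -> /=; lia. Qed.


Lemma seq_min (T : eqType) (A : T -> Prop) (r : T -> T -> Prop) (s : seq T) :
  (forall a, A a -> r a a) ->
  (forall a b c, A a -> A b -> A c -> r a b -> r b c -> r a c) ->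
  (forall a b, A a -> A b -> r a b \/ r b a) ->
  (exists a, a \in s /\ A a) ->
  exists m, [/\ m \in s, A m & forall q, q \in s -> A q -> r m q].
Proof.
move=> hr ht htot; elim: s => [|a s IH]; first by case=> ? [].
move=> hex.
case: (pselect (exists a, a \in s /\ A a)) => [/IH [m [ms Am mmin]]|hno].
- case: (pselect (A a)) => [Aa|nAa].
  + case: (htot a m Aa Am) => ham.
    * exists a; split => //; first by rewrite inE eqxx.
      move=> q; rewrite inE => /orP[/eqP ->|qs] Aq; first exact: hr.
      exact: (ht a m q Aa Am Aq ham (mmin q qs Aq)).
    * exists m; split => //; first by rewrite inE ms orbT.
      move=> q; rewrite inE => /orP[/eqP ->|qs] Aq //; exact: mmin.
  + exists m; split => //; first by rewrite inE ms orbT.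
    move=> q; rewrite inE => /orP[/eqP ->|qs] Aq //; exact: mmin.
- have Aa : A a.
    case: hex => b []; rewrite inE => /orP[/eqP ->//|bs] Ab.
    by exfalso; apply: hno; exists b.
  exists a; split => //; first by rewrite inE eqxx.
  move=> q; rewrite inE => /orP[/eqP ->|qs] Aq; first exact: hr.
  by exfalso; apply: hno; exists q.
Qed.

Definition GInv (R : realType) (d : nat) (H : set 'rV[R]_d) (a : R) :=
  (forall y z, H y -> H z -> exists n : 'rV[int]_d, y - z = a *: map_mx intr n) /\
  (forall y (n : 'rV[int]_d), H y -> H (y + a *: map_mx intr n)).
Arguments GInv {R d}.

Lemma sum_le_edist (R : realType) (d : nat) (q y z : 'rV[R]_d) :
  (forall i, (q 0 i - y 0 i) ^+ 2 <= (q 0 i - z 0 i) ^+ 2) -> edist q y <= edist q z.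
Proof.
move=> h; rewrite /edist ler_sqrt; last by apply: sumr_ge0 => i _; exact: sqr_ge0.
by apply: ler_sum => i _.
Qed.

Lemma lemA (R : realType) (d : nat) (H : set 'rV[R]_d) (b : R) (y q : 'rV[R]_d) :
  0 < b -> (forall z, H z -> exists n : 'rV[int]_d, z - y = b *: map_mx intr n) ->
  (forall i, `|q 0 i - y 0 i| <= b / 2%:R) -> Vor H y q.
Proof.
move=> hb hH hq z Hz; have [n hn] := hH z Hz.
apply: sum_le_edist => i.
have -> : z 0 i = y 0 i + b * (n 0 i)%:~R.
  by have := congr1 (fun M : 'rV[R]_d => M 0 i) hn; rewrite !mxE => <-; ring.
rewrite opprD addrA; exact: (@coord_le R b _ _ (n 0 i) hb (hq i)).
Qed.

Lemma lemB (R : realType) (d : nat) (H : set 'rV[R]_d) (b : R) (y q y' : 'rV[R]_d) :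
  0 < b -> H y -> (forall z, H z -> exists n : 'rV[int]_d, z - y = b *: map_mx intr n) ->
  (forall i, `|q 0 i - y 0 i| < b / 2%:R) -> H y' -> Vor H y' q -> y' = y.
Proof.
move=> hb Hy hH hq Hy' hV.
have [n hn] := hH y' Hy'.
have ey : forall i, y' 0 i = y 0 i + b * (n 0 i)%:~R.
  by move=> i; have := congr1 (fun M : 'rV[R]_d => M 0 i) hn; rewrite !mxE => <-; ring.
case: (pselect (exists i, n 0 i != 0)) => [[i ni]|hno]; last first.
  apply/rowP => j; rewrite ey.
  have -> : n 0 j = 0 by apply/eqP; apply/negPn/negP => hj; apply: hno; exists j.
  by rewrite mulr0 addr0.
have hlt : \sum_(j < d) (q 0 j - y 0 j) ^+ 2 < \sum_(j < d) (q 0 j - y' 0 j) ^+ 2.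
  rewrite (bigD1 i) //= [X in _ < X](bigD1 i) //=; apply: ltr_leD.
    rewrite ey opprD addrA; exact: (@coord_lt R b _ _ (n 0 i) hb (hq i) ni).
  apply: ler_sum => j _; rewrite ey opprD addrA.
  exact: (@coord_le R b _ _ (n 0 j) hb (ltW (hq j))).
exfalso; have := hV y Hy; apply/negP; rewrite -ltNge.
rewrite /edist ltr_sqrt //.
exact: (le_lt_trans (sumr_ge0 _ (fun j _ => sqr_ge0 (q 0 j - y 0 j))) hlt).
Qed.


Lemma edist_one (R : realType) (d : nat) (q x z : 'rV[R]_d) (i : 'I_d) :
  (forall j, j != i -> z 0 j = x 0 j) -> edist q x <= edist q z ->
  (q 0 i - x 0 i) ^+ 2 <= (q 0 i - z 0 i) ^+ 2.
Proof.
move=> hz; rewrite /edist ler_sqrt; last by apply: sumr_ge0 => j _; exact: sqr_ge0.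
rewrite (bigD1 i) //= [X in _ <= X](bigD1 i) //=.
rewrite (eq_bigr (fun j => (q 0 j - z 0 j) ^+ 2)); last by move=> j /hz ->.
by rewrite lerD2r.
Qed.

Lemma lemC (R : realType) (d : nat) (H : set 'rV[R]_d) (a : R) (x b : 'rV[R]_d) :
  0 < a -> (forall y (n : 'rV[int]_d), H y -> H (y + a *: map_mx intr n)) ->
  H x -> Vor H x b -> forall i, `|b 0 i - x 0 i| <= a / 2%:R.
Proof.
move=> ha hcl Hx hV i.
have e1 := @edist_one R d b x (x + a *: map_mx intr (delta_mx 0 i)) i _ (hV _ (hcl _ _ Hx)).
have e2 := @edist_one R d b x (x + a *: map_mx intr (- delta_mx 0 i)) i _ (hV _ (hcl _ _ Hx)).
have s1 : forall j, j != i -> (x + a *: map_mx intr (delta_mx 0 i)) 0 j = x 0 j.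
  by move=> j hj; rewrite !mxE (negbTE hj) /= mulr0 addr0.
have s2 : forall j, j != i -> (x + a *: map_mx intr (- delta_mx 0 i)) 0 j = x 0 j.
  by move=> j hj; rewrite !mxE (negbTE hj) /= oppr0 mulr0 addr0.
have {e1 s1} := e1 s1; have {e2 s2} := e2 s2; rewrite !mxE !eqxx /= => e2 e1.
have i1 : ((1:int)%:~R : R) = 1 by [].
have i2 : ((-1:int)%:~R : R) = -1 by rewrite intrN.
rewrite i1 in e1; rewrite i2 in e2.
rewrite ler_norml; apply/andP; split; nra.
Qed.

Definition gfmap (R : realType) (d : nat) (O e : 'rV[R]_d) (a : R) (w : 'rV[R]_d) :=
  2%:R *: (w - O) + O + (a / 2%:R) *: e.
Arguments gfmap {R d}.

Lemma inv_up (R : realType) (d : nat) (H G' : set 'rV[R]_d) (a : R) (O e : 'rV[R]_d) :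
  GInv H a -> G' = [set gfmap O e a w | w in H] -> GInv G' (2%:R * a).
Proof.
move=> [hd hc] ->; split.
- move=> _ _ [w Hw <-] [w' Hw' <-]; have [n hn] := hd w w' Hw Hw'.
  exists n; apply/rowP => j; have := congr1 (fun M : 'rV[R]_d => M 0 j) hn.
  rewrite /gfmap !mxE => hj.
transitivity (2%:R * (w 0 j - w' 0 j)); first ring.
  by rewrite hj mulrA.
- move=> _ n [w Hw <-]; exists (w + a *: map_mx intr n); first exact: hc.
  apply/rowP => j; rewrite /gfmap !mxE; ring.
Qed.

Lemma inv_down (R : realType) (d : nat) (H G' : set 'rV[R]_d) (a : R) (O e : 'rV[R]_d) :
  GInv G' (2%:R * a) -> G' = [set gfmap O e a w | w in H] -> GInv H a.
Proof.
move=> [hd hc] hG; split.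
- move=> y z Hy Hz.
  have Gy : G' (gfmap O e a y) by rewrite hG; exists y.
  have Gz : G' (gfmap O e a z) by rewrite hG; exists z.
  have [n hn] := hd (gfmap O e a y) (gfmap O e a z) Gy Gz.
  exists n; apply/rowP => j; have := congr1 (fun M : 'rV[R]_d => M 0 j) hn.
  rewrite /gfmap !mxE => hj; lra.
- move=> y n Hy.
  have Gy : G' (gfmap O e a y) by rewrite hG; exists y.
  have := hc (gfmap O e a y) n Gy.
  rewrite hG => -[w Hw hw].
  suff -> : y + a *: map_mx intr n = w by [].
  apply/rowP => j; have := congr1 (fun M : 'rV[R]_d => M 0 j) hw.
  rewrite /gfmap !mxE => hj; lra.
Qed.


Lemma alphaS (R : realType) (lam : R) (s : int) : alpha lam (s + 1) = 2%:R * alpha lam s.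
Proof.
rewrite /alpha exprzDr ?expr1z; first ring.
by rewrite unitfE pnatr_eq0.
Qed.

Lemma alpha_gt0 (R : realType) (lam : R) (s : int) : 0 < lam -> 0 < alpha lam s.
Proof. by move=> h; rewrite /alpha mulr_gt0 // exprz_gt0 // ltr0n. Qed.

Lemma inv_all (R : realType) (d : nat) (lam : R) (G : int -> set 'rV[R]_d) :
  grid_family lam G -> forall s, GInv (G s) (alpha lam s).
Proof.
move=> [hG0 hstep].
have up : forall s, GInv (G s) (alpha lam s) -> GInv (G (s + 1)) (alpha lam (s + 1)).
  move=> s hs; have [O [hO [e [he hGs]]]] := hstep s.
  rewrite alphaS; exact: (@inv_up _ _ _ _ _ O e hs hGs).
have down : forall s, GInv (G (s + 1)) (alpha lam (s + 1)) -> GInv (G s) (alpha lam s).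
  move=> s hs; have [O [hO [e [he hGs]]]] := hstep s.
  rewrite alphaS in hs; exact: (@inv_down _ _ _ _ _ O e hs hGs).
have base : GInv (G 0) (alpha lam 0).
  rewrite hG0 /alpha expr0z mulr1; split.
  - move=> _ _ [k _ <-] [k' _ <-]; exists (k - k').
    by apply/rowP => j; rewrite !mxE intrB; ring.
  - move=> _ n [k _ <-]; exists (k + n) => //.
    by apply/rowP => j; rewrite !mxE intrD; ring.
have pos : forall n : nat, GInv (G n) (alpha lam n).
  elim=> [|n IH] //; have := up _ IH.
  by have -> : (n%:Z + 1) = n.+1%:Z by lia.
have neg : forall n : nat, GInv (G (Negz n)) (alpha lam (Negz n)).
  elim=> [|n IH]; first by apply: down.
  apply: down; by have -> : (Negz n.+1 + 1) = Negz n by rewrite !NegzE; lia.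
by case.
Qed.


Arguments lemA {R d H b y q}.
Arguments lemB {R d H b y q y'}.
Arguments lemC {R d H a x b}.

Theorem lemma5 (R : realType) (d : nat) (lam : R) (G : int -> set 'rV[R]_d)
    (P : set 'rV[R]_d) (le : 'rV[R]_d -> 'rV[R]_d -> Prop) :
  (0 < d)%N -> 0 < lam -> grid_family lam G ->
  finite_set P -> total_order_on P le -> unique_assignment G P ->
  forall (s : int) (x : 'rV[R]_d), active G P s x ->
    gmap G s x = amap G (s + 1)%R (bmap G P le s x).
Proof.
move=> d0 lam0 hgf finP [lrefl [lanti [ltrans ltot]]] huniq s _ [p Pp <-].
set x := amap G s p.
have [hxG hxV] : G s x /\ Vor (G s) x p.
  have [y [hy _]] := huniq s p Pp.
  exact: (@xgetPex _ 0 [set y | G s y /\ Vor (G s) y p] (ex_intro _ y hy)).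
have [hd hc] := @inv_all _ _ _ _ hgf s.
have [hd1 hc1] := @inv_all _ _ _ _ hgf (s + 1).
set a := alpha lam s.
have a0 : 0 < a by exact: (@alpha_gt0 _ lam s lam0).
       
set b := bmap G P le s x.
have [Pb [hbV _]] : P b /\ Vor (G s) x b /\ True.
  have : exists q, P q /\ Vor (G s) x q /\
     forall q', P q' -> Vor (G s) x q' ->
       edist q x < edist q' x \/ (edist q x = edist q' x /\ le q q').
    have [X hX] := (finite_fsetP (A := P)).1 finP.
    have inX : forall q, P q -> q \in X by move=> q; rewrite hX.
    have [m [_ [Pm Vm] mmin]] : exists m, [/\ m \in enum_fset X, (P m /\ Vor (G s) x m) &
       forall q, q \in enum_fset X -> (P q /\ Vor (G s) x q) ->
       edist m x < edist q x \/ (edist m x = edist q x /\ le m q)]; last first.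
      by exists m; split => //; split => // q' Pq' Vq'; apply: mmin => //; apply: inX.
    apply: (@seq_min _ (fun q => P q /\ Vor (G s) x q)
      (fun q q' => edist q x < edist q' x \/ (edist q x = edist q' x /\ le q q')) (enum_fset X)).
    - by move=> q hq; right; split => //; apply: lrefl; case: hq.
    - move=> q1 q2 q3 [P1 _] [P2 _] [P3 _] [h12|[e12 l12]] [h23|[e23 l23]].
      + by left; apply: lt_trans h23.
      + by left; rewrite -e23.
      + by left; rewrite e12.
      + by right; split; [rewrite e12|exact: (ltrans q1 q2 q3)].
    - move=> q1 q2 [P1 _] [P2 _].
      case: (ltgtP (edist q1 x) (edist q2 x)) => h; [left; left|right; left|] => //.
      by case: (ltot q1 q2 P1 P2) => h'; [left|right]; right.
    - by exists p; split => //; apply: inX.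
  move=> hex; have [h1 [h2 _]] := xgetPex 0 hex; by [].
have [O [hO [eps [heps hGs]]]] := (hgf.2 s).
have [m hm] := hd O x hO hxG.
set k : 'rV[int]_d := \row_i (if eps 0 i == 1 then divz (m 0 i) 2 else divz (m 0 i + 1) 2).
set w := x + a *: map_mx intr k.
have hw : G s w by apply: hc.
set y := gfmap O eps a w.
have hy : G (s + 1) y by rewrite hGs; exists w.
have hxy : forall i, `|x 0 i - y 0 i| = a / 2%:R.
  move=> i.
  have Oi : O 0 i = x 0 i + a * (m 0 i)%:~R.
    by have := congr1 (fun M : 'rV[R]_d => M 0 i) hm; rewrite !mxE => <-; ring.
  have yi : y 0 i = 2%:R * (x 0 i + a * (k 0 i)%:~R - O 0 i) + O 0 i + a / 2%:R * eps 0 i.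
    by rewrite /y /gfmap /w !mxE.
  have kE : k 0 i = if eps 0 i == 1 then divz (m 0 i) 2 else divz (m 0 i + 1) 2.
    by rewrite /k mxE.
  have i1 : ((1:int)%:~R : R) = 1 by [].
  case: (heps i) => ei; rewrite ei ?eqxx /= in kE; rewrite ei in yi.
  - have : m 0 i = k 0 i + k 0 i \/ m 0 i = k 0 i + k 0 i + 1 by rewrite kE; lia.
    case=> hmi; rewrite hmi ?intrD ?i1 in Oi.
    + have -> : x 0 i - y 0 i = - (a / 2%:R) by rewrite yi Oi; lra.
      by rewrite normrN gtr0_norm // divr_gt0 // ltr0n.
    + have -> : x 0 i - y 0 i = a / 2%:R.
        rewrite yi Oi.
lra.
      by rewrite gtr0_norm // divr_gt0 // ltr0n.
  - have ne : (-1 : R) == 1 = false.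
      by apply/negbTE/eqP => h; lra.
    rewrite ne /= in kE.
    have : m 0 i = k 0 i + k 0 i \/ m 0 i = k 0 i + k 0 i - 1 by rewrite kE; lia.
    case=> hmi; rewrite hmi ?intrD ?intrB ?i1 in Oi.
    + have -> : x 0 i - y 0 i = a / 2%:R.
        rewrite yi Oi.
lra.
      by rewrite gtr0_norm // divr_gt0 // ltr0n.
    + have -> : x 0 i - y 0 i = - (a / 2%:R) by rewrite yi Oi; lra.
      by rewrite normrN gtr0_norm // divr_gt0 // ltr0n.
have hb2 : alpha lam (s + 1) = 2%:R * a by rewrite alphaS.
have b0 : 0 < alpha lam (s + 1) by rewrite hb2 mulr_gt0 // ltr0n.
have hdiff : forall z, G (s + 1) z -> exists n : 'rV[int]_d, z - y = alpha lam (s + 1) *: map_mx intr n.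
  by move=> z hz; apply: hd1.
have half : alpha lam (s + 1) / 2%:R = a.
  by rewrite hb2 mulrC mulrA mulVf ?mul1r // pnatr_eq0.
have hyV : forall q : 'rV[R]_d, (forall i, `|q 0 i - y 0 i| <= a) -> Vor (G (s + 1)) y q.
  move=> q hq; apply: lemA b0 hdiff _ => i; rewrite half; exact: hq.
have hyU : forall y', G (s + 1) y' -> Vor (G (s + 1)) y' x -> y' = y.
  move=> y' hy' hV'; apply: (lemB b0 hy hdiff _ hy' hV') => i.
  by rewrite half hxy ltr_pdivrMr ?ltr0n // ltr_pMr // ltr1n.
have hbx := lemC a0 hc hxG hbV.
have hbV1 : Vor (G (s + 1)) y b.
  apply: hyV => i; have := hbx i; have := hxy i.
  move=> e1 e2; rewrite (_ : b 0 i - y 0 i = (b 0 i - x 0 i) + (x 0 i - y 0 i)); last by ring.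
  apply: (le_trans (ler_normD _ _)); rewrite e1.
  by rewrite [leRHS](splitr a) lerD2r.
have -> : gmap G s x = y.
  rewrite /gmap; apply: hyU.
  - have := @xgetPex _ 0 [set y' | G (s + 1) y' /\ Vor (G (s + 1)) y' x].
    by case; [exists y; split => //; apply: hyV => i; rewrite hxy ler_pdivrMr ?ltr0n // ler_pMr // ler1n|].
  - have := @xgetPex _ 0 [set y' | G (s + 1) y' /\ Vor (G (s + 1)) y' x].
    by case; [exists y; split => //; apply: hyV => i; rewrite hxy ler_pdivrMr ?ltr0n // ler_pMr // ler1n|].
have [y0 [hy0 u0]] := huniq (s + 1) b Pb.
rewrite /amap.
have := @xgetPex _ 0 [set y' | G (s + 1) y' /\ Vor (G (s + 1)) y' b] (ex_intro _ y (conj hy hbV1)).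
move=> /u0 <-; exact: esym (u0 y (conj hy hbV1)).
Qed.
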